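(* Let $(J,R,\sigma)$ be a generalized complex structure of type $1$ on a real $4$-dimensional Lie algebra $\mathfrak g$, with pure spinor $\rho=(\theta+iJ^*\theta)+(i-\lambda)\omega\wedge(\theta+iJ^*\theta)$ as described in the context. Then $d\rho=0$ (the structure is Calabi–Yau) if and only if $[\mathfrak g,\mathfrak g]\subset\operatorname{Im}R$.
   Context: Let $\mathfrak g$ be a real finite-dimensional Lie algebra, $\Phi(\mathfrak g)=\mathfrak g\oplus\mathfrak g^*$ with the neutral pairing $\langle u+\alpha,v+\beta\rangle=\tfrac12(\alpha(v)+\beta(u))$ and the bracket $[u+\alpha,v+\beta]=[u,v]+\mathrm{ad}_u^t\beta-\mathrm{ad}_v^t\alpha$, where $(\mathrm{ad}_u^t\alpha)(v)=-\alpha([u,v])$. A generalized complex structure on $\mathfrak g$ is an endomorphism $K$ of $\Phi(\mathfrak g)$ with $K^2=-\mathrm{Id}$, $\langle Ka,b\rangle+\langle a,Kb\rangle=0$ for all $a,b$, and vanishing Nijenhuis torsion $N_K(a,b)=[Ka,Kb]-K[Ka,b]-K[a,Kb]+K^2[a,b]$. Writing $K=\begin{pmatrix}J&R\\ \sigma&-J^*\end{pmatrix}$ with $J\in\mathrm{End}(\mathfrak g)$ and skew-symmetric $R:\mathfrak g^*\to\mathfrak g$, $\sigma:\mathfrak g\to\mathfrak g^*$, the triple $(J,R,\sigma)$ is also called a generalized complex structure on $\mathfrak g$; in dimension 4 it is of type 1 if $\operatorname{rank}R=2$. For such a structure, with $\mathfrak h=\operatorname{Im}R$, $\mathfrak p=\ker\sigma$,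 one has $\mathfrak g=\mathfrak h\oplus\mathfrak p$ and $J|_{\mathfrak h}=\lambda\mathrm{Id}$; $\omega\in\wedge^2\mathfrak g^*$ is defined by $\omega(R\xi_1,R\xi_2)=\xi_1(R\xi_2)$ and $i_X\omega=0$ for $X\in\mathfrak p$; $\theta$ is a nonzero element of the annihilator $\mathfrak h^0$. $d$ denotes the Chevalley–Eilenberg differential on $\wedge^\bullet\mathfrak g^*\otimes\mathbb C$. *)

(* Defs.v *)
(* A real 4-dimensional Lie algebra is modelled on row
   vectors 'rV[R]_4 over an arbitrary real closed field R (this includes the
   real numbers); complex scalars are R[i] from mathcomp-real-closed. *)
From HB Require Import structures.
From mathcomp Require Import all_boot all_order all_algebra.
From mathcomp Require Import complex.
Set Implicit Arguments. Unset Strict Implicit. Unset Printing Implicit Defensive.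
Import Order.TTheory GRing.Theory Num.Theory.
Local Open Scope ring_scope.
Local Open Scope complex_scope.

(* vectors of g and covectors of g^* are both row vectors of length 4 *)
Notation vec R := 'rV[R]_4.

Definition dpair (R : rcfType) (alpha v : vec R) : R := (alpha *m v^T) 0 0.

Definition is_lie_bracket (R : rcfType) (br : vec R -> vec R -> vec R) : Prop :=
  (forall (a : R) (u v w : vec R), br (a *: u + v) w = a *: br u w + br v w) /\
  (forall u v : vec R, br u v = - br v u) /\
  (forall u v w : vec R, br u (br v w) + br v (br w u) + br w (br u v) = 0).

Definition adt (R : rcfType) (br : vec R -> vec R -> vec R) (u alpha : vec R)
  : vec R := \row_j (- dpair alpha (br u (delta_mx 0 j))).

Definition Phi (R : rcfType) := (vec R * vec R)%type.

Definition Phi_add (R : rcfType) (a b : Phi R) : Phi R := (a.1 + b.1, a.2 + b.2).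
Definition Phi_opp (R : rcfType) (a : Phi R) : Phi R := (- a.1, - a.2).

Definition Phi_pair (R : rcfType) (a b : Phi R) : R :=
  2^-1 * (dpair a.2 b.1 + dpair b.2 a.1).

Definition Phi_br (R : rcfType) (br : vec R -> vec R -> vec R) (a b : Phi R)
  : Phi R := (br a.1 b.1, adt br a.1 b.2 - adt br b.1 a.2).

(* An endomorphism K of Phi(g), given by its four blocks (matrices acting on
   row vectors):  K(u + alpha) = (J u + R alpha) + (sigma u + D alpha),
   with J u = u *m MJ, R alpha = alpha *m MR, sigma u = u *m Ms,
   D alpha = alpha *m MD. *)
Definition Kapp (R : rcfType) (MJ MR Ms MD : 'M[R]_4) (a : Phi R) : Phi R :=
  (a.1 *m MJ + a.2 *m MR, a.1 *m Ms + a.2 *m MD).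

(* generalized complex structure: K^2 = -Id, K skew for <,>, N_K = 0 *)
Definition is_gen_complex (R : rcfType) (br : vec R -> vec R -> vec R)
  (MJ MR Ms MD : 'M[R]_4) : Prop :=
  let K := Kapp MJ MR Ms MD in
  let brP := Phi_br br in
  (forall a : Phi R, K (K a) = Phi_opp a) /\
  (forall a b : Phi R, Phi_pair (K a) b + Phi_pair a (K b) = 0) /\
  (forall a b : Phi R,
     Phi_add (Phi_add (brP (K a) (K b)) (Phi_opp (K (brP (K a) b))))
             (Phi_add (Phi_opp (K (brP a (K b)))) (K (K (brP a b))))
     = (0, 0)).

(* complex-valued forms of degree 0..4 on g, as functions of their arguments *)
Definition form1 (R : rcfType) := vec R -> R[i].
Definition form2 (R : rcfType) := vec R -> vec R -> R[i].
Definition form3 (R : rcfType) := vec R -> vec R -> vec R -> R[i].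
Definition form4 (R : rcfType) := vec R -> vec R -> vec R -> vec R -> R[i].

(* mixed-degree forms in  wedge^. g^* (x) C  (wedge^k g^* = 0 for k > 4) *)
Record mform (R : rcfType) := MForm {
  mf0 : R[i]; mf1 : form1 R; mf2 : form2 R; mf3 : form3 R; mf4 : form4 R }.

Section CE.
Variables (R : rcfType) (br : vec R -> vec R -> vec R).

(* Chevalley-Eilenberg differential (trivial coefficients):
   d f (x_0,..,x_k) = sum_{i<j} (-1)^(i+j) f([x_i,x_j], x_0,..^i..^j..,x_k) *)
Definition d1 (f : form1 R) : form2 R := fun x0 x1 => - f (br x0 x1).
Definition d2 (f : form2 R) : form3 R := fun x0 x1 x2 =>
  - f (br x0 x1) x2 + f (br x0 x2) x1 - f (br x1 x2) x0.
Definition d3 (f : form3 R) : form4 R := fun x0 x1 x2 x3 =>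
  - f (br x0 x1) x2 x3 + f (br x0 x2) x1 x3 - f (br x0 x3) x1 x2
  - f (br x1 x2) x0 x3 + f (br x1 x3) x0 x2 - f (br x2 x3) x0 x1.

(* d on mixed forms: d of a 0-form is 0, d of a 4-form is a 5-form = 0 *)
Definition dmf (m : mform R) : mform R :=
  MForm 0 (fun _ => 0) (d1 (mf1 m)) (d2 (mf2 m)) (d3 (mf3 m)).
End CE.

Definition mform_eq0 (R : rcfType) (m : mform R) : Prop :=
  mf0 m = 0 /\ (forall x, mf1 m x = 0) /\ (forall x y, mf2 m x y = 0) /\
  (forall x y z, mf3 m x y z = 0) /\ (forall x y z w, mf4 m x y z w = 0).

Definition wedge21 (R : rcfType) (w : form2 R) (f : form1 R) : form3 R :=
  fun x y z => w x y * f z - w x z * f y + w y z * f x.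

Definition cform1 (R : rcfType) (alpha : vec R) : form1 R :=
  fun x => (dpair alpha x)%:C.
Definition cform2 (R : rcfType) (W : 'M[R]_4) : form2 R :=
  fun x y => ((x *m W *m y^T) 0 0)%:C.

Definition dualmap (R : rcfType) (MJ : 'M[R]_4) (theta : vec R) : vec R :=
  theta *m MJ^T.

Definition rho_spinor (R : rcfType) (MJ W : 'M[R]_4) (lam : R) (theta : vec R)
  : mform R :=
  let Th : form1 R := fun x => cform1 theta x + 'i * cform1 (dualmap MJ theta) x in
  MForm 0 Th (fun _ _ => 0)
        (fun x y z => ('i - lam%:C) * wedge21 (cform2 W) Th x y z)
        (fun _ _ _ _ => 0).

(* Main.v *)
Require Import Defs.
From mathcomp Require Import all_boot all_order all_algebra.
From mathcomp Require Import complex ring lra.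
Import Order.TTheory GRing.Theory Num.Theory.
Local Open Scope ring_scope.
Local Open Scope complex_scope.

Section S.
Variable R : rcfType.
Variable br : vec R -> vec R -> vec R.
Variables MJ MR Ms MD W : 'M[R]_4.
Variable lam : R.
Variable theta : vec R.
Hypothesis Hlie : is_lie_bracket br.
Hypothesis Hgc : is_gen_complex br MJ MR Ms MD.

Lemma br0l w : br 0 w = 0.
Proof.
case: Hlie => L _.
have := L 1 0 0 w; rewrite !scale1r addr0 => /(congr1 (fun x => x - br 0 w)).
by rewrite addrK subrr.
Qed.
Lemma brDl u v w : br (u + v) w = br u w + br v w.
Proof. case: Hlie => L _; have := L 1 u v w; rewrite !scale1r; done. Qed.
Lemma brZl a u w : br (a *: u) w = a *: br u w.
Proof. case: Hlie => L _; have := L a u 0 w; rewrite !addr0 br0l addr0; done. Qed.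
Lemma brC u v : br u v = - br v u.
Proof. by case: Hlie => _ [S _]. Qed.
Lemma brDr u v w : br w (u + v) = br w u + br w v.
Proof. by rewrite brC brDl opprD -!brC. Qed.
Lemma brZr a u w : br w (a *: u) = a *: br w u.
Proof. by rewrite brC brZl -scalerN -brC. Qed.
Lemma brNl u w : br (- u) w = - br u w.
Proof. by rewrite -scaleN1r brZl scaleN1r. Qed.
Lemma brNr u w : br w (- u) = - br w u.
Proof. by rewrite -scaleN1r brZr scaleN1r. Qed.
Lemma brvv u : br u u = 0.
Proof.
have H : (2%:R : R) *: br u u = 0.
  by rewrite scaler_nat mulr2n {1}brC addNr.
move/eqP: H; rewrite scaler_eq0 => /orP[|/eqP//].
by rewrite pnatr_eq0.
Qed.

Lemma mx0_bil (M : 'M[R]_4) : (forall a b : vec R, (a *m M *m b^T) 0 0 = 0) -> M = 0.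
Proof.
move=> H; apply/matrixP => i j; rewrite mxE -(H (delta_mx 0 i) (delta_mx 0 j)).
by rewrite -rowE trmx_delta -colE !mxE.
Qed.
Lemma mxeqv (A B : 'M[R]_4) : (forall u : vec R, u *m A = u *m B) -> A = B.
Proof. by move=> H; apply/row_matrixP => i; rewrite !rowE H. Qed.

Lemma Kcomp : (forall u : vec R, u *m MJ *m MJ + u *m Ms *m MR = - u) /\
  (forall u : vec R, u *m MJ *m Ms + u *m Ms *m MD = 0) /\
  (forall u : vec R, u *m MR *m MJ + u *m MD *m MR = 0) /\
  (forall u : vec R, u *m MR *m Ms + u *m MD *m MD = - u).
Proof.
case: Hgc => HK2 _.
split; [|split; [|split]] => u.
- by have := HK2 (u, 0); rewrite /Kapp /Phi_opp /= => -[]; rewrite !mul0mx !addr0.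
- by have := HK2 (u, 0); rewrite /Kapp /Phi_opp /= => -[] _; rewrite !mul0mx !addr0 oppr0.
- by have := HK2 (0, u); rewrite /Kapp /Phi_opp /= => -[]; rewrite !mul0mx !add0r oppr0.
- by have := HK2 (0, u); rewrite /Kapp /Phi_opp /= => -[] _; rewrite !mul0mx !add0r.
Qed.

Lemma tr11 (M : 'M[R]_1) : M = M^T.
Proof. by apply/matrixP => i j; rewrite mxE !ord1. Qed.

Lemma dpair0l v : dpair 0 v = 0 :> R.
Proof. by rewrite /dpair mul0mx mxE. Qed.
Lemma dpair0r v : dpair v 0 = 0 :> R.
Proof. by rewrite /dpair trmx0 mulmx0 mxE. Qed.

Lemma Kskew : MD = - MJ^T /\ Ms^T = - Ms /\ MR^T = - MR.
Proof.
case: Hgc => _ [Hs _].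
have E : forall A : 'M[R]_4, (forall a b : vec R, 2^-1 * ((a *m A *m b^T) 0 0) = 0) -> A = 0.
  move=> A H; apply: mx0_bil => a b; have := H a b.
  by move/eqP; rewrite mulf_eq0 invr_eq0 pnatr_eq0 /= => /eqP.
split; [|split].
- apply/eqP; rewrite -subr_eq0 opprK; apply/eqP/E => a b.
  have := Hs (b, 0) (0, a); rewrite /Phi_pair /Kapp /=.
  rewrite ?mul0mx ?addr0 ?add0r ?dpair0l ?dpair0r ?add0r ?addr0 /dpair trmx_mul mulmxA => <-.
  by rewrite mulmxDr mulmxDl mxE mulrDr addrC.
- apply/eqP; rewrite -subr_eq0 opprK; apply/eqP/E => a b.
  have := Hs (a, 0) (b, 0); rewrite /Phi_pair /Kapp /=.
  rewrite ?mul0mx ?addr0 ?dpair0l ?dpair0r ?add0r ?addr0 /dpair => <-.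
  rewrite mulmxDr mulmxDl mxE mulrDr addrC; congr (_ + _ * _).
  by rewrite (tr11 (b *m Ms *m a^T)) !trmx_mul trmxK mulmxA.
- apply/eqP; rewrite -subr_eq0 opprK; apply/eqP/E => a b.
  have := Hs (0, b) (0, a); rewrite /Phi_pair /Kapp /=.
  rewrite ?mul0mx ?add0r ?dpair0l ?dpair0r ?add0r ?addr0 /dpair => <-.
  rewrite mulmxDr mulmxDl mxE mulrDr; congr (_ * _ + _ * _).
  - by rewrite trmx_mul mulmxA.
  - by rewrite (tr11 (a *m MR *m b^T)) !trmx_mul trmxK mulmxA.
Qed.
Hypothesis Hrank : \rank MR = 2%N.
Hypothesis HJ : forall x : vec R, (x <= MR)%MS -> x *m MJ = lam *: x.
Hypothesis HWsk : W^T = - W.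
Hypothesis HW : forall xi1 xi2 : vec R,
      ((xi1 *m MR) *m W *m (xi2 *m MR)^T) 0 0 = dpair xi1 (xi2 *m MR).
Hypothesis HWp : forall X : vec R, X *m Ms = 0 -> X *m W = 0.
Hypothesis Hth0 : theta != 0.
Hypothesis Hth : forall x : vec R, (x <= MR)%MS -> dpair theta x = 0.

Definition c := 1 + lam ^+ 2.
Lemma c_neq0 : c != 0.
Proof. have := sqr_ge0 lam; rewrite /c => H; apply/lt0r_neq0; lra. Qed.

Lemma m11_0 (M : 'M[R]_1) : M 0 0 = 0 -> M = 0.
Proof. by move=> H; apply/matrixP => i j; rewrite !ord1 H mxE. Qed.

Lemma rv0 (v : vec R) : (forall u : vec R, (v *m u^T) 0 0 = 0) -> v = 0.
Proof.
move=> H; apply/rowP => j; rewrite mxE -(H (delta_mx 0 j)).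
by rewrite trmx_delta -colE !mxE.
Qed.

Lemma dpairDr (a u v : vec R) : dpair a (u + v) = dpair a u + dpair a v.
Proof. by rewrite /dpair linearD /= mulmxDr mxE. Qed.
Lemma dpairZr (a v : vec R) (k : R) : dpair a (k *: v) = k * dpair a v.
Proof. by rewrite /dpair linearZ /= -scalemxAr mxE. Qed.
Lemma dpairNr (a v : vec R) : dpair a (- v) = - dpair a v.
Proof. by rewrite -scaleN1r dpairZr mulN1r. Qed.
Lemma dpairDl (a b v : vec R) : dpair (a + b) v = dpair a v + dpair b v.
Proof. by rewrite /dpair mulmxDl mxE. Qed.
Lemma dpairZl (a v : vec R) (k : R) : dpair (k *: a) v = k * dpair a v.
Proof. by rewrite /dpair -scalemxAl mxE. Qed.
Lemma dpairC (a v : vec R) : dpair a v = (v *m a^T) 0 0.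
Proof. by rewrite /dpair (tr11 (a *m v^T)) trmx_mul trmxK. Qed.

Lemma E1 (u : vec R) : u *m MJ *m MJ + u *m Ms *m MR = - u.
Proof. by case: Kcomp. Qed.
Lemma E2 (u : vec R) : u *m MJ *m Ms + u *m Ms *m MD = 0.
Proof. by case: Kcomp => _ []. Qed.
Lemma E3 (u : vec R) : u *m MR *m MJ + u *m MD *m MR = 0.
Proof. by case: Kcomp => _ [] _ []. Qed.

Lemma MRJ : MR *m MJ = lam *: MR.
Proof. by apply/row_matrixP => i; rewrite row_mul HJ ?row_sub // !rowE scalemxAr. Qed.

Lemma hsig (z : vec R) : (z <= MR)%MS -> z *m Ms *m MR = - c *: z.
Proof.
move=> Hz; have E := E1 z; rewrite (HJ _ Hz) -scalemxAl (HJ _ Hz) scalerA in E.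
apply: (addrI (lam * lam *: z)); rewrite E.
by rewrite /c expr2 opprD scalerDl scaleN1r scaleNr addrCA subrr addr0.
Qed.

Lemma th_JJ (x : vec R) : dpair theta (x *m MJ *m MJ) = - dpair theta x.
Proof.
have -> : x *m MJ *m MJ = - x - x *m Ms *m MR by rewrite -(E1 x) addrK.
by rewrite dpairDr !dpairNr (Hth _ (submxMl _ _)) oppr0 addr0.
Qed.
Definition thp := theta *m MJ^T.

Lemma th_MR : theta *m MR^T = 0.
Proof.
apply: rv0 => u.
have -> : (theta *m MR^T *m u^T) 0 0 = dpair theta (u *m MR) by rewrite /dpair trmx_mul mulmxA.
exact: Hth (submxMl _ _).
Qed.

Lemma dpair_thp (x : vec R) : dpair thp x = dpair theta (x *m MJ).
Proof. by rewrite /dpair /thp trmx_mul mulmxA. Qed.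

Lemma thp_MR : thp *m MR^T = 0.
Proof. by rewrite /thp -mulmxA -trmx_mul MRJ linearZ /= -scalemxAr th_MR scaler0. Qed.

Lemma thp_J : thp *m MJ^T = - theta.
Proof.
apply/eqP; rewrite -subr_eq0 opprK; apply/eqP/rv0 => u.
rewrite mulmxDl mxE.
have -> : (thp *m MJ^T *m u^T) 0 0 = dpair theta (u *m MJ *m MJ) by rewrite /dpair /thp !trmx_mul !mulmxA.
by rewrite th_JJ addNr.
Qed.

Lemma th_indep (a b : R) : a *: theta + b *: thp = 0 -> a = 0 /\ b = 0.
Proof.
move=> H1.
have H2 : a *: thp - b *: theta = 0.
  have := congr1 (fun v => v *m MJ^T) H1; rewrite /= mulmxDl -!scalemxAl thp_J mul0mx.
  by rewrite /thp scalerN.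
set t := thp in H1 H2; clearbody t.
have Hj : forall j, (a ^+ 2 + b ^+ 2) * theta 0 j = 0.
  move=> j; have := congr1 (fun v : 'rV[R]_4 => v 0 j) H1; have := congr1 (fun v : 'rV[R]_4 => v 0 j) H2.
  rewrite /= !mxE => e2 e1.
  have -> : (a ^+ 2 + b ^+ 2) * theta 0 j = a * (a * theta 0 j + b * t 0 j) - b * (a * t 0 j - b * theta 0 j) by ring.
  by rewrite e1 e2; ring.
have Hab : a ^+ 2 + b ^+ 2 = 0.
  case: (eqVneq (a ^+ 2 + b ^+ 2) 0) => // Hn; exfalso.
  move/negP: Hth0; apply; apply/eqP/rowP => j.
  by have := Hj j; move/eqP; rewrite mulf_eq0 (negbTE Hn) /= mxE => /eqP.
have ha := sqr_ge0 a; have hb := sqr_ge0 b.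
have : a ^+ 2 = 0 by lra.
have : b ^+ 2 = 0 by lra.
by move/eqP; rewrite sqrf_eq0 => /eqP -> /eqP; rewrite sqrf_eq0 => /eqP ->.
Qed.

Lemma thp_neq0 : thp != 0.
Proof.
apply/negP => /eqP H; have := @th_indep 0 1; rewrite H scaler0 scale0r addr0.
by case=> // _ /eqP; rewrite oner_eq0.
Qed.

Lemma cap_th : (theta :&: thp)%MS = 0.
Proof.
apply/eqP; rewrite -submx0; apply/rV_subP => w; rewrite sub_capmx.
case/andP => /sub_rVP[a ->] /sub_rVP[b Hb].
have : a *: theta + (- b) *: thp = 0 by rewrite Hb scaleNr subrr.
by case/th_indep => -> _; rewrite scale0r sub0mx.
Qed.

Lemma h0_eq : (kermx MR^T == theta + thp)%MS.
Proof.
have S : (theta + thp <= kermx MR^T)%MS.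
  by rewrite addsmx_sub; apply/andP; split; apply/sub_kermxP; [exact: th_MR | exact: thp_MR].
have E := (mxrank_leqif_eq S).2.
have : (theta + thp == kermx MR^T)%MS.
  rewrite -E mxrank_disjoint_sum ?cap_th // mxrank_ker mxrank_tr Hrank.
  by rewrite !rank_rV Hth0 thp_neq0.
by move/eqmxP/eqmx_sym/eqmxP.
Qed.

Lemma xth0 (a x : vec R) : dpair a x = 0 -> x *m a^T = 0.
Proof. by move=> H; apply: m11_0; rewrite -dpairC. Qed.

Lemma hmem (x : vec R) : dpair theta x = 0 -> dpair theta (x *m MJ) = 0 -> (x <= MR)%MS.
Proof.
move=> H1 H2; rewrite submxE; apply/eqP/rowP => j; rewrite [RHS]mxE.
pose cj : vec R := (cokermx MR *m (delta_mx j 0 : 'cV[R]_4))^T.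
have Hc : (cj <= kermx MR^T)%MS.
  by apply/sub_kermxP; rewrite /cj -trmx_mul mulmxA mulmx_coker mul0mx trmx0.
have : (cj <= theta + thp)%MS by case/andP: h0_eq => Hk _; exact: submx_trans Hc Hk.
case/sub_addsmxP => u Hu.
have -> : (x *m cokermx MR) 0 j = (x *m cj^T) 0 0.
  by rewrite /cj trmxK [in RHS]mulmxA -colE [RHS]mxE.
have Ht : x *m thp^T = 0 by apply: xth0; rewrite dpair_thp.
rewrite Hu linearD /= (trmx_mul u.1) (trmx_mul u.2) mulmxDr !mulmxA (xth0 _ _ H1) Ht.
by rewrite !mul0mx addr0 mxE.
Qed.

Lemma skew_pair (M : 'M[R]_4) (a b : vec R) : M^T = - M ->
  (a *m M *m b^T) 0 0 = - (b *m M *m a^T) 0 0.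
Proof.
move=> HM; rewrite (tr11 (b *m M *m a^T)) !trmx_mul trmxK HM mulNmx mulmxN [in RHS]mxE.
by rewrite opprK mulmxA.
Qed.

Lemma skew_diag (M : 'M[R]_4) (a : vec R) : M^T = - M -> (a *m M *m a^T) 0 0 = 0.
Proof.
move=> HM; have := skew_pair M a a HM => /eqP; rewrite -subr_eq0 opprK -mulr2n.
by rewrite mulrn_eq0 /= => /eqP.
Qed.

Lemma MJMs : MJ *m Ms = Ms *m MJ^T.
Proof.
case: Kskew => HD _; apply: mxeqv => u; have := E2 u.
by rewrite HD mulmxN => /eqP; rewrite subr_eq0 !mulmxA => /eqP.
Qed.

Lemma MRMJ : MR *m MJ = MJ^T *m MR.
Proof.
case: Kskew => HD _; apply: mxeqv => u; have := E3 u.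
by rewrite HD mulmxN mulNmx => /eqP; rewrite subr_eq0 !mulmxA => /eqP.
Qed.

Definition T := c *: Ms + Ms *m MR *m Ms.

Lemma T_sk : T^T = - T.
Proof.
case: Kskew => _ [HS HR].
rewrite /T linearD /= linearZ /= !trmx_mul HS HR.
by rewrite !(mulNmx, mulmxN) !opprK scalerN opprD mulmxA.
Qed.

Lemma T_h (z : vec R) : (z <= MR)%MS -> z *m T = 0.
Proof.
move=> Hz; rewrite /T mulmxDr -scalemxAr !mulmxA hsig // -scalemxAl.
by rewrite scaleNr subrr.
Qed.

Lemma T_J : MJ *m T = T *m MJ^T.
Proof.
rewrite /T mulmxDr mulmxDl -scalemxAr -scalemxAl MJMs; congr (_ + _).
by rewrite !mulmxA MJMs -[Ms *m MJ^T *m MR]mulmxA -MRMJ mulmxA -[Ms *m MR *m MJ *m Ms]mulmxA MJMs !mulmxA.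
Qed.

Lemma dpair_delta (a : vec R) j : dpair a (delta_mx 0 j) = a 0 j.
Proof. by rewrite /dpair trmx_delta -colE mxE. Qed.

Lemma exists_y0 : exists y0 : vec R, dpair theta y0 = 1 /\ dpair theta (y0 *m MJ) = 0.
Proof.
have /existsP[j Hj] : [exists j, theta 0 j != 0].
  rewrite -negb_forall; apply: contra Hth0 => /forallP H; apply/eqP/rowP => j.
  by rewrite mxE; apply/eqP/H.
pose v : vec R := (theta 0 j)^-1 *: delta_mx 0 j.
have Hv : dpair theta v = 1 by rewrite dpairZr dpair_delta mulVf.
pose t := dpair theta (v *m MJ).
have Ht : 1 + t ^+ 2 != 0.
  have := sqr_ge0 t => H; apply/lt0r_neq0; lra.
exists ((1 + t ^+ 2)^-1 *: (v + t *: (v *m MJ))); split.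
  by rewrite dpairZr dpairDr dpairZr Hv -/t -expr2 mulVf.
rewrite -scalemxAl mulmxDl -scalemxAl dpairZr dpairDr dpairZr th_JJ Hv -/t.
by rewrite mulrN1 subrr mulr0.
Qed.

Lemma decomp (y : vec R) : dpair theta y = 1 -> dpair theta (y *m MJ) = 0 ->
  forall x : vec R, ((x - dpair theta x *: y + dpair theta (x *m MJ) *: (y *m MJ))%R <= MR)%MS.
Proof.
move=> H1 H2 x; apply: hmem.
  by rewrite !dpairDr dpairNr !dpairZr H1 H2 mulr1 mulr0 addr0 subrr.
rewrite !mulmxDl mulNmx -!scalemxAl !dpairDr dpairNr !dpairZr H2 th_JJ H1.
by rewrite mulr0 subr0 mulrN1 subrr.
Qed.

Definition bil (M : 'M[R]_4) (a b : vec R) := (a *m M *m b^T) 0 0.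
Lemma bilDl M (a a' b : vec R) : bil M (a + a') b = bil M a b + bil M a' b.
Proof. by rewrite /bil !mulmxDl mxE. Qed.
Lemma bilDr M (a b b' : vec R) : bil M a (b + b') = bil M a b + bil M a b'.
Proof. by rewrite /bil linearD /= mulmxDr mxE. Qed.
Lemma bilZl M (k : R) (a b : vec R) : bil M (k *: a) b = k * bil M a b.
Proof. by rewrite /bil -!scalemxAl mxE. Qed.
Lemma bilZr M (k : R) (a b : vec R) : bil M a (k *: b) = k * bil M a b.
Proof. by rewrite /bil linearZ /= -scalemxAr mxE. Qed.
Lemma bilNl M (a b : vec R) : bil M (- a) b = - bil M a b.
Proof. by rewrite -scaleN1r bilZl mulN1r. Qed.
Lemma bilNr M (a b : vec R) : bil M a (- b) = - bil M a b.
Proof. by rewrite -scaleN1r bilZr mulN1r. Qed.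

Lemma Tzero : T = 0.
Proof.
have [y0 [Hy1 Hy2]] := exists_y0.
have tsk a b : bil T a b = - bil T b a by apply: skew_pair T_sk.
have tl z b : (z <= MR)%MS -> bil T z b = 0 by move=> Hz; rewrite /bil T_h // mul0mx mxE.
have tr a z : (z <= MR)%MS -> bil T a z = 0 by move=> Hz; rewrite tsk tl ?oppr0.
have tJ a b : bil T (a *m MJ) b = bil T a (b *m MJ).
  by rewrite /bil -(mulmxA a MJ T) T_J mulmxA -(mulmxA (a *m T)) -trmx_mul.
have t00 a : bil T a a = 0 by apply: skew_diag T_sk.
have t01 : bil T y0 (y0 *m MJ) = 0.
  have := tsk (y0 *m MJ) y0; rewrite tJ => /eqP; rewrite -subr_eq0 opprK -mulr2n.
  by rewrite mulrn_eq0 /= => /eqP.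
have t10 : bil T (y0 *m MJ) y0 = 0 by rewrite tJ.
have t11 : bil T (y0 *m MJ) (y0 *m MJ) = 0.
  rewrite tJ; have -> : y0 *m MJ *m MJ = - y0 - y0 *m Ms *m MR by rewrite -(E1 y0) addrK.
  by rewrite bilDr !bilNr t00 tr ?submxMl // oppr0 addr0.
apply: mx0_bil => a b; rewrite -/(bil T a b).
have Ea := decomp _ Hy1 Hy2 a; have Eb := decomp _ Hy1 Hy2 b.
set da := (a - _ + _)%R in Ea; set db := (b - _ + _)%R in Eb.
have -> : a = da + (dpair theta a *: y0 - dpair theta (a *m MJ) *: (y0 *m MJ)).
  by rewrite /da addrACA subrK subrr addr0.
have -> : b = db + (dpair theta b *: y0 - dpair theta (b *m MJ) *: (y0 *m MJ)).
  by rewrite /db addrACA subrK subrr addr0.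
rewrite bilDl tl // add0r bilDr tr // add0r.
rewrite !(bilDl, bilDr, bilNl, bilNr, bilZl, bilZr) t00 t01 t10 t11.
by rewrite !(mulr0, oppr0, addr0).
Qed.

Lemma adt0 (u : vec R) : adt br u 0 = 0.
Proof. by apply/rowP => j; rewrite !mxE dpair0l oppr0. Qed.

Lemma Nvec (X Z : vec R) : X *m Ms = 0 -> (Z <= MR)%MS ->
  (forall u v, (br u v <= MR)%MS) -> adt br X (Z *m Ms) *m MR = - c *: br X Z.
Proof.
move=> HX HZ Hbr.
case: Hgc => HK2 [_ HN].
have := HN (X, 0) (Z, 0); rewrite /= HK2 /Kapp /Phi_br /Phi_add /Phi_opp /=.
case=> E _; move: E.
rewrite !mul0mx !addr0 HX !adt0 ?subr0 ?sub0r (HJ _ HZ) !brZr (HJ _ (Hbr _ _)) -scalemxAl (HJ _ (Hbr _ _)).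
rewrite mul0mx addr0.
move: (adt br X (Z *m Ms) *m MR) (br X Z) (br (X *m MJ) Z) => AM B B' E.
apply/rowP => j; have := congr1 (fun v : vec R => v 0 j) E; rewrite !mxE /c => e.
have -> : AM 0 j = AM 0 j + (lam * B' 0 j - lam * B' 0 j +
   (- (lam * (lam * B 0 j) + AM 0 j) - B 0 j)) by rewrite e addr0.
ring.
Qed.

Lemma br_sum (u : vec R) (F : 'I_4 -> vec R) : br u (\sum_j F j) = \sum_j br u (F j).
Proof.
apply: (big_rec2 (fun a b => br u a = b)) => [|j a b _ <-].
  by rewrite brC br0l oppr0.
by rewrite brDr.
Qed.

Lemma dpair_sum (a : vec R) (F : 'I_4 -> vec R) : dpair a (\sum_j F j) = \sum_j dpair a (F j).
Proof.
apply: (big_rec2 (fun x y => dpair a x = y)) => [|j x y _ <-].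
  by rewrite dpair0r.
by rewrite dpairDr.
Qed.

Lemma adt_pair (u a v : vec R) : dpair (adt br u a) v = - dpair a (br u v).
Proof.
have -> : br u v = br u (\sum_j v 0 j *: delta_mx 0 j) by rewrite -row_sum_delta.
rewrite br_sum dpair_sum -sumrN {1}/dpair mxE.
apply: eq_bigr => j _; rewrite brZr dpairZr !mxE.
by rewrite mulNr mulrC.
Qed.

Lemma omega_R (xi V : vec R) : (V <= MR)%MS -> bil W (xi *m MR) V = dpair xi V.
Proof. by case/submxP => eta ->; rewrite /bil HW. Qed.

Lemma h_as_R (Z : vec R) : (Z <= MR)%MS -> Z = (- c^-1 *: (Z *m Ms)) *m MR.
Proof.
move=> HZ; rewrite -scalemxAl hsig // scalerA mulrN mulNr mulVf ?c_neq0 //.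
by rewrite opprK scale1r.
Qed.

Lemma Kid (X Z V : vec R) : X *m Ms = 0 -> (Z <= MR)%MS -> (V <= MR)%MS ->
  (forall u v, (br u v <= MR)%MS) -> bil W (br X Z) V + bil W Z (br X V) = 0.
Proof.
move=> HX HZ HV Hbr.
have -> : br X Z = (- c^-1 *: adt br X (Z *m Ms)) *m MR.
  rewrite -scalemxAl Nvec // scalerA mulrN mulNr mulVf ?c_neq0 //.
  by rewrite opprK scale1r.
rewrite omega_R // [X in bil W X _](h_as_R _ HZ) omega_R //.
by rewrite !dpairZl adt_pair mulrN addNr.
Qed.

Lemma sMRs : Ms *m MR *m Ms = - c *: Ms.
Proof.
have := Tzero; rewrite /T => /eqP; rewrite addrC addr_eq0 => /eqP ->.
by rewrite scaleNr.
Qed.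

Lemma exists_y : exists y : vec R,
  y *m Ms = 0 /\ dpair theta y = 1 /\ dpair theta (y *m MJ) = 0.
Proof.
have [y0 [H1 H2]] := exists_y0.
exists (y0 + c^-1 *: (y0 *m Ms *m MR)); split; [|split].
- rewrite mulmxDl -scalemxAl -!mulmxA (mulmxA Ms) sMRs -scalemxAr scalerA.
  by rewrite mulrN mulVf ?c_neq0 // scaleN1r subrr.
- by rewrite dpairDr dpairZr (Hth _ (submxMl _ _)) mulr0 addr0.
- rewrite mulmxDl -scalemxAl (HJ _ (submxMl _ _)) dpairDr !dpairZr.
  by rewrite (Hth _ (submxMl _ _)) H2 !mulr0 addr0.
Qed.

Lemma bil0l (v : vec R) (M : 'M[R]_4) : bil M 0 v = 0.
Proof. by rewrite /bil !mul0mx mxE. Qed.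

Lemma Wp (w z : vec R) : w *m Ms = 0 -> bil W z w = 0.
Proof.
move=> Hw; rewrite /bil skew_pair // HWp // mul0mx mxE oppr0 //.
Qed.

Lemma Wp' (w z : vec R) : w *m Ms = 0 -> bil W w z = 0.
Proof. by move=> Hw; rewrite /bil HWp // mul0mx mxE. Qed.

Lemma basis_h : exists e1 e2 : vec R, (e1 <= MR)%MS /\ (e2 <= MR)%MS /\
  forall z : vec R, (z <= MR)%MS -> exists a b : R, z = a *: e1 + b *: e2.
Proof.
have gen : forall n (B : 'M[R]_(n, 4)), n = 2%N -> (B :=: MR)%MS ->
   exists e1 e2 : vec R, (e1 <= MR)%MS /\ (e2 <= MR)%MS /\
   forall z : vec R, (z <= MR)%MS -> exists a b : R, z = a *: e1 + b *: e2.
  move=> n B Hn HB; subst n.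
  exists (row ord0 B), (row (lift ord0 ord0) B); split; [|split].
  - by rewrite -HB row_sub.
  - by rewrite -HB row_sub.
  move=> z; rewrite -HB => /submxP[u ->].
  exists (u 0 ord0), (u 0 (lift ord0 ord0)).
  by rewrite mulmx_sum_row big_ord_recl big_ord1.
exact: gen (eq_row_base MR).
Qed.

Lemma full_dec (e1 e2 y : vec R) : dpair theta y = 1 -> dpair theta (y *m MJ) = 0 ->
  (forall z : vec R, (z <= MR)%MS -> exists a b : R, z = a *: e1 + b *: e2) ->
  forall x : vec R, exists al be a b : R, x = al *: e1 + be *: e2 + a *: y + b *: (y *m MJ).
Proof.
move=> H1 H2 Hb x; have [al [be E]] := Hb _ (decomp _ H1 H2 x).
exists al, be, (dpair theta x), (- dpair theta (x *m MJ)).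
rewrite -E; apply/rowP => j; rewrite !mxE; ring.
Qed.

Definition Rphi (phi x0 x1 x2 x3 : vec R) : R :=
  let f B y z := bil W B y * dpair phi z - bil W B z * dpair phi y in
  - f (br x0 x1) x2 x3 + f (br x0 x2) x1 x3 - f (br x0 x3) x1 x2
  - f (br x1 x2) x0 x3 + f (br x1 x3) x0 x2 - f (br x2 x3) x0 x1.

Lemma Rphi0 (phi : vec R) : (forall z, (z <= MR)%MS -> dpair phi z = 0) ->
  (forall u v, (br u v <= MR)%MS) -> forall x0 x1 x2 x3, Rphi phi x0 x1 x2 x3 = 0.
Proof.
move=> Hphi Hbr x0 x1 x2 x3.
have [e1 [e2 [He1 [He2 Hb]]]] := basis_h.
have [y [Hy [H1 H2]]] := exists_y.
have HyJ : (y *m MJ) *m Ms = 0 by rewrite -mulmxA MJMs mulmxA Hy mul0mx.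
have [a0 [b0 [c0 [d0 ->]]]] := full_dec _ _ _ H1 H2 Hb x0.
have [a1 [b1 [c1 [d1 ->]]]] := full_dec _ _ _ H1 H2 Hb x1.
have [a2 [b2 [c2 [d2 ->]]]] := full_dec _ _ _ H1 H2 Hb x2.
have [a3 [b3 [c3 [d3 ->]]]] := full_dec _ _ _ H1 H2 Hb x3.
have sk : forall a b, bil W a b = - bil W b a by move=> a b; apply: skew_pair.
have K1 : bil W (br e2 y) e1 = bil W (br e1 y) e2.
  have := Kid _ _ _ Hy He1 He2 Hbr; rewrite (brC y e1) (brC y e2) bilNl bilNr (sk e1).
  move=> E; lra.
have K2 : bil W (br e2 (y *m MJ)) e1 = bil W (br e1 (y *m MJ)) e2.
  have := Kid _ _ _ HyJ He1 He2 Hbr; rewrite (brC (y *m MJ) e1) (brC (y *m MJ) e2) bilNl bilNr (sk e1).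
  move=> E; lra.
set yJ := y *m MJ in HyJ K2 *.
rewrite /Rphi /=.
rewrite !(brDl, brDr, brZl, brZr).
rewrite !brvv (brC e2 e1) (brC y e1) (brC yJ e1) (brC y e2) (brC yJ e2) (brC yJ y).
rewrite !(bilDl, bilDr, bilZl, bilZr, bilNl, scaler0, scalerN).
have b0l : forall v, bil W 0 v = 0 by move=> v; rewrite /bil !mul0mx mxE.
have wy : forall z, bil W z y = 0 by move=> z; exact: Wp.
have wyJ : forall z, bil W z yJ = 0 by move=> z; exact: Wp.
rewrite !b0l !wy !wyJ !(dpairDr, dpairZr) (Hphi _ He1) (Hphi _ He2) K1 K2.
ring.
Qed.

Lemma cf1E (x : vec R) : cform1 theta x = (dpair theta x)%:C.
Proof. by []. Qed.
Lemma cf1JE (x : vec R) : cform1 (dualmap MJ theta) x = (dpair thp x)%:C.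
Proof. by []. Qed.
Lemma cf2E (x y : vec R) : cform2 W x y = (bil W x y)%:C.
Proof. by []. Qed.

Lemma main : mform_eq0 (dmf br (rho_spinor MJ W lam theta)) <-> (forall u v, (br u v <= MR)%MS).
Proof.
rewrite /mform_eq0 /dmf /rho_spinor /=.
split.
  case=> _ [_ [H2 _]] u v; have := H2 u v; rewrite /d1 /= cf1E cf1JE => E.
  have E' : ((dpair theta (br u v))%:C + 'i * (dpair thp (br u v))%:C = 0 :> R[i]).
    by rewrite -[LHS]opprK E oppr0.
  have := congr1 (@complex.Re R) E'; have := congr1 (@complex.Im R) E'; rewrite /= => e1 e2.
  apply: hmem; first lra.
  by rewrite -dpair_thp; lra.
move=> Hbr.
have thbr a b : cform1 theta (br a b) = 0 by rewrite cf1E Hth.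
have thpbr a b : cform1 (dualmap MJ theta) (br a b) = 0.
  by rewrite cf1JE dpair_thp (HJ _ (Hbr _ _)) dpairZr Hth // mulr0.
split; first by []. split; first by [].
split; first by move=> x y; rewrite /d1 thbr thpbr mulr0 addr0 oppr0.
split; first by move=> x y z; rewrite /d2; ring.
move=> x0 x1 x2 x3; rewrite /d3 /wedge21 !thbr !thpbr.
rewrite !cf1E !cf1JE !cf2E.
transitivity (('i - lam%:C) * ((Rphi theta x0 x1 x2 x3)%:C + 'i * (Rphi thp x0 x1 x2 x3)%:C)).
  rewrite /Rphi /= !(rmorphD, rmorphN, rmorphM) /=; ring.
have Hthp : forall z, (z <= MR)%MS -> dpair thp z = 0.
  by move=> z Hz; rewrite dpair_thp (HJ _ Hz) dpairZr Hth // mulr0.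
rewrite (Rphi0 _ Hth Hbr) (Rphi0 _ Hthp Hbr) rmorph0 mulr0 addr0 mulr0 //.
Qed.
End S.

Local Close Scope complex_scope.

Theorem proposition2p3 (R : rcfType) (br : vec R -> vec R -> vec R)
  (MJ MR Ms MD : 'M[R]_4) (lam : R) (W : 'M[R]_4) (theta : vec R) :
  is_lie_bracket br ->
  is_gen_complex br MJ MR Ms MD ->
  \rank MR = 2%N ->
  (* J restricted to h = Im R is lam * Id *)
  (forall x : vec R, (x <= MR)%MS -> x *m MJ = lam *: x) ->
  (* omega in wedge^2 g^*, omega(R xi1, R xi2) = xi1(R xi2), i_X omega = 0 on p = ker sigma *)
  W^T = - W ->
  (forall xi1 xi2 : vec R,
      ((xi1 *m MR) *m W *m (xi2 *m MR)^T) 0 0 = dpair xi1 (xi2 *m MR)) ->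
  (forall X : vec R, X *m Ms = 0 -> X *m W = 0) ->
  (* theta a nonzero element of the annihilator of h *)
  theta != 0 ->
  (forall x : vec R, (x <= MR)%MS -> dpair theta x = 0) ->
  (mform_eq0 (dmf br (rho_spinor MJ W lam theta)) <->
   (forall u v : vec R, (br u v <= MR)%MS)).
Proof.
move=> Hlie Hgc Hrank HJ HWsk HW HWp Hth0 Hth.
exact (main R br MJ MR Ms MD W lam theta Hlie Hgc Hrank HJ HWsk HW HWp Hth0 Hth).
Qed.
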